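(* Every (fork, banner)-free graph $G$ satisfies $\chi(G)\le\omega(G)^2$.
   Context: All graphs are finite and simple; $\chi$ is chromatic number, $\omega$ clique number. The fork is obtained from $K_{1,3}$ by subdividing one edge once. The banner is a $4$-cycle with one pendant vertex attached. $G$ is $(H_1,H_2)$-free if it has no induced subgraph isomorphic to $H_1$ or $H_2$. *)

(* Defs.v *)
From mathcomp Require Import all_boot.
Set Implicit Arguments. Unset Strict Implicit. Unset Printing Implicit Defensive.

Definition simple_graph (T : finType) (e : rel T) : Prop :=
  symmetric e /\ irreflexive e.

Definition has_induced (T : finType) (e : rel T) (k : nat) (h : rel 'I_k) : Prop :=
  exists f : 'I_k -> T, injective f /\ forall x y, e (f x) (f y) = h x y.

Definition rel_of_edges (E : seq (nat * nat)) : rel 'I_5 :=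
  fun x y => ((nat_of_ord x, nat_of_ord y) \in E) || ((nat_of_ord y, nat_of_ord x) \in E).

(* fork: K_{1,3} with center 0, leaves 1,2,3; edge 0-3 extended by subdivision vertex i.e.
   edges 0-1, 0-2, 0-3, 3-4 *)
Definition fork : rel 'I_5 := rel_of_edges [:: (0,1); (0,2); (0,3); (3,4)].

(* banner: 4-cycle 0-1-2-3-0 with pendant vertex 4 attached to 0 *)
Definition banner : rel 'I_5 := rel_of_edges [:: (0,1); (1,2); (2,3); (3,0); (0,4)].

Definition free_of (T : finType) (e : rel T) (k : nat) (h : rel 'I_k) : Prop :=
  ~ has_induced e h.

Definition is_clique (T : finType) (e : rel T) (S : {set T}) : bool :=
  [forall x in S, forall y in S, (x != y) ==> e x y].

Definition clique_number (T : finType) (e : rel T) : nat :=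
  \max_(S : {set T} | is_clique e S) #|S|.

Definition colorable (T : finType) (e : rel T) (k : nat) : bool :=
  [exists f : {ffun T -> 'I_k}, [forall x, forall y, e x y ==> (f x != f y)]].

(* least k such that G is k-colorable (#|T| colours always suffice) *)
Definition chromatic_number (T : finType) (e : rel T) : nat :=
  \big[minn/#|T|]_(k < #|T|.+1 | colorable e k) k.

(* Main.v *)
Require Import Defs.
From mathcomp Require Import all_boot zify.
From Stdlib Require Import Classical.
Set Implicit Arguments. Unset Strict Implicit. Unset Printing Implicit Defensive.

Section S.
Variables (T : finType) (e : rel T).
Hypothesis esym : symmetric e.
Hypothesis eirr : irreflexive e.
Hypothesis hfork : free_of e fork.
Hypothesis hban : free_of e banner.

Ltac contra_e := match goal with
 | H : is_true (e ?u ?u) |- _ => by rewrite eirr in H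
 | H : is_true (?u != ?u) |- _ => by rewrite eqxx in H
 | H : is_true (e ?u ?v), H' : is_true (~~ e ?u ?v) |- _ => by rewrite H in H'
 | H : is_true (e ?u ?v), H' : is_true (~~ e ?v ?u) |- _ => by rewrite esym H in H'
 end.

Lemma nofork a b c d x : b != c -> e a b -> e a c -> e a d -> e d x ->
  ~~ e b c -> ~~ e b d -> ~~ e c d -> ~~ e a x -> ~~ e b x -> ~~ e c x -> False.
Proof.
move=> bc ab ac ad dx nbc nbd ncd nax nbx ncx.
apply: hfork.
exists (fun i : 'I_5 => nth a [:: a; b; c; d; x] i); split.
  move=> i j; case: i => [[|[|[|[|[|i]]]]] Hi] //; case: j => [[|[|[|[|[|j]]]]] Hj] //= Hf;
  try (by apply: val_inj); subst; contra_e.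
have ba := ab; have ca := ac; have da := ad; have xd := dx.
rewrite esym in ba; rewrite esym in ca; rewrite esym in da; rewrite esym in xd.
have ncb := nbc; have ndb := nbd; have ndc := ncd; have nxa := nax; have nxb := nbx; have nxc := ncx.
rewrite esym in ncb; rewrite esym in ndb; rewrite esym in ndc; rewrite esym in nxa; rewrite esym in nxb; rewrite esym in nxc.
move=> i j; case: i => [[|[|[|[|[|i]]]]] Hi] //; case: j => [[|[|[|[|[|j]]]]] Hj] //=;
rewrite /fork /rel_of_edges /= ?eirr //;
by rewrite ?(ab, ba, ac, ca, ad, da, dx, xd, negbTE nbc, negbTE ncb, negbTE nbd, negbTE ndb,
  negbTE ncd, negbTE ndc, negbTE nax, negbTE nxa, negbTE nbx, negbTE nxb, negbTE ncx, negbTE nxc).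
Qed.

Lemma noban a b c d x : b != d -> e a b -> e b c -> e c d -> e d a -> e a x ->
  ~~ e a c -> ~~ e b d -> ~~ e x b -> ~~ e x c -> ~~ e x d -> False.
Proof.
move=> bd ab bc cd da ax nac nbd nxb nxc nxd.
apply: hban.
exists (fun i : 'I_5 => nth a [:: a; b; c; d; x] i); split.
  move=> i j; case: i => [[|[|[|[|[|i]]]]] Hi] //; case: j => [[|[|[|[|[|j]]]]] Hj] //= Hf;
  try (by apply: val_inj); subst; contra_e.
have ba := ab; have cb := bc; have dc := cd; have ad := da; have xa := ax.
rewrite esym in ba; rewrite esym in cb; rewrite esym in dc; rewrite esym in ad; rewrite esym in xa.
have nca := nac; have ndb := nbd; have nbx := nxb; have ncx := nxc; have ndx := nxd.
rewrite esym in nca; rewrite esym in ndb; rewrite esym in nbx; rewrite esym in ncx; rewrite esym in ndx.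
move=> i j; case: i => [[|[|[|[|[|i]]]]] Hi] //; case: j => [[|[|[|[|[|j]]]]] Hj] //=;
rewrite /banner /rel_of_edges /= ?eirr //;
by rewrite ?(ab, ba, bc, cb, cd, dc, da, ad, ax, xa, negbTE nac, negbTE nca, negbTE nbd, negbTE ndb,
  negbTE nxb, negbTE nbx, negbTE nxc, negbTE ncx, negbTE nxd, negbTE ndx).
Qed.

Lemma sq_mono a b : a <= b -> a ^ 2 <= b ^ 2.
Proof. by move=> h; rewrite leq_exp2r. Qed.
Lemma sq_add a b w : a + b <= w -> a ^ 2 + b ^ 2 <= w ^ 2.
Proof.
move=> h; have h2 := sq_mono h; apply: (leq_trans _ h2).
by rewrite sqrnD leq_addr.
Qed.
Lemma sq_add1 k p w : k + p <= w -> k ^ 2 + p <= w ^ 2.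
Proof.
move=> h; have h2 := sq_mono h; apply: (leq_trans _ h2).
rewrite sqrnD -addnA leq_add2l.
clear h h2; nia.
Qed.
Lemma sq_pred w : 0 < w -> w.-1 * w.-1.+1 < w ^ 2.
Proof. by case: w => // n _; rewrite /= expnS expn1 ltn_mul2r /=. Qed.

Lemma e_neq x y : e x y -> x != y.
Proof. by apply: contraTneq => ->; rewrite eirr. Qed.

Lemma cliqueP (C : {set T}) :
  reflect (forall x y, x \in C -> y \in C -> x != y -> e x y) (is_clique e C).
Proof.
apply: (iffP forall_inP) => [H x y xC yC xy | H x xC].
  by move/forall_inP: (H x xC) => /(_ y yC) /implyP; apply.
by apply/forall_inP => y yC; apply/implyP; apply: H.
Qed.

Lemma clique1 x : is_clique e [set x].
Proof. by apply/cliqueP => y z; rewrite !inE => /eqP-> /eqP->; rewrite eqxx. Qed.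

Lemma cliqueU1 x (C : {set T}) : is_clique e C -> (forall y, y \in C -> e x y) ->
  is_clique e (x |: C).
Proof.
move=> /cliqueP hC hx; apply/cliqueP => y z; rewrite !inE.
case/orP=> [/eqP->|yC]; case/orP=> [/eqP->|zC]; rewrite ?eqxx //.
- by move=> _; apply: hx.
- by move=> _; rewrite esym; apply: hx.
- by apply: hC.
Qed.

Definition om (S : {set T}) := \max_(C : {set T} | (C \subset S) && is_clique e C) #|C|.

Definition good (S : {set T}) := exists f : T -> nat,
  (forall x, x \in S -> f x < om S ^ 2) /\
  (forall x y, x \in S -> y \in S -> e x y -> f x != f y).

Lemma om_ge (C : {set T}) (S : {set T}) : C \subset S -> is_clique e C -> #|C| <= om S.
Proof.
move=> h1 h2; rewrite /om; apply: (bigmax_sup C) => //; by rewrite h1 h2.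
Qed.

Lemma om_wit (S : {set T}) : exists C : {set T}, [/\ C \subset S, is_clique e C & om S = #|C|].
Proof.
have P0 : (set0 \subset S) && is_clique e set0.
  by rewrite sub0set; apply/cliqueP => x y; rewrite inE.
case: (@arg_maxnP _ set0 (fun C : {set T} => (C \subset S) && is_clique e C) (fun C : {set T} => #|C|) P0) => C /andP[h1 h2] hmax.
exists C; split => //; apply/eqP; rewrite eqn_leq om_ge // andbT.
by apply/bigmax_leqP => D /hmax.
Qed.

Lemma om_mono (A B : {set T}) : A \subset B -> om A <= om B.
Proof.
move=> AB; apply/bigmax_leqP => C /andP[CA hC]; apply: om_ge => //.
exact: subset_trans CA AB.
Qed.

Lemma ramsey t (A : {set T}) :
  (forall C : {set T}, C \subset A -> is_clique e C -> #|C| <= t) ->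
  (forall x y z, x \in A -> y \in A -> z \in A -> x != y -> x != z -> y != z ->
     ~~ e x y -> ~~ e x z -> ~~ e y z -> False) ->
  #|A| <= t * t.+1.
Proof.
elim: t A => [|t IH] A hC hT.
  case: (set_0Vmem A) => [->|[x xA]]; first by rewrite cards0.
  have := hC [set x]; rewrite sub1set xA cards1 => /(_ isT (clique1 x)); by [].
case: (set_0Vmem A) => [->|[x xA]]; first by rewrite cards0.
set A1 := [set y in A | e x y].
set A2 := [set y in A | (y != x) && ~~ e x y].
have sub : A \subset x |: (A1 :|: A2).
  apply/subsetP => y yA; rewrite !inE yA /=.
  by case: (y == x); case: (e x y).
have c2 : #|A2| <= t.+1.
  apply: hC; first by apply/subsetP => y; rewrite inE => /andP[].
  apply/cliqueP => y z; rewrite !inE => /and3P[yA yx nxy] /and3P[zA zx nxz] yz.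
  apply/negPn/negP => nyz.
  by apply: (hT x y z xA yA zA); rewrite // eq_sym.
have c1 : #|A1| <= t * t.+1.
  apply: IH.
    move=> C CA1 hC'.
    have xC : x \notin C.
      apply/negP => xC; move/subsetP: CA1 => /(_ x xC); by rewrite inE eirr andbF.
    have h1 : x |: C \subset A.
      apply/subsetP => y; rewrite !inE => /orP[/eqP->//|yC].
      by move/subsetP: CA1 => /(_ y yC); rewrite inE => /andP[].
    have h2 : is_clique e (x |: C).
      apply: cliqueU1 => // y yC.
      by move/subsetP: CA1 => /(_ y yC); rewrite inE => /andP[].
    have := hC _ h1 h2; rewrite cardsU1 xC /=; lia.
  move=> a b c; rewrite !inE => /andP[aA _] /andP[bA _] /andP[cA _].
  exact: hT.
have := subset_leq_card sub; rewrite cardsU1.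
have := leq_card_setU A1 A2 => /leqifP.
case: ifP => _ h; nia.
Qed.

Lemma free_color (s : seq nat) n : size s < n -> exists2 c, c < n & c \notin s.
Proof.
move=> hs.
case: (boolP [exists c : 'I_n, (c : nat) \notin s]) => [/existsP[c hc]|/existsPn hn].
  by exists c.
have : size (iota 0 n) <= size s.
  apply: uniq_leq_size (iota_uniq 0 n) _ => c; rewrite mem_iota add0n => /andP[_ cn].
  by have := hn (Ordinal cn); rewrite negbK.
by rewrite size_iota leqNgt hs.
Qed.


Lemma om_pos (S : {set T}) x : x \in S -> 0 < om S.
Proof. by move=> xS; have := om_ge (S := S) (C := [set x]); rewrite sub1set xS cards1 => /(_ isT (clique1 x)). Qed.

Lemma step_greedy (S : {set T}) u : u \in S ->
  (forall a b c, a \in S -> b \in S -> c \in S -> e u a -> e u b -> e u c ->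
     a != b -> a != c -> b != c -> ~~ e a b -> ~~ e a c -> ~~ e b c -> False) ->
  good (S :\ u) -> good S.
Proof.
move=> uS hcf [f [fb fp]].
set N := [set y in S | e u y].
have w1 := om_pos uS.
have hN : #|N| <= (om S).-1 * (om S).-1.+1.
  apply: ramsey.
    move=> C CN hC.
    have uC : u \notin C.
      apply/negP => uC; move/subsetP: CN => /(_ u uC); by rewrite inE eirr andbF.
    have h1 : u |: C \subset S.
      apply/subsetP => y; rewrite !inE => /orP[/eqP->//|yC].
      by move/subsetP: CN => /(_ y yC); rewrite inE => /andP[].
    have h2 : is_clique e (u |: C).
      apply: cliqueU1 => // y yC.
      by move/subsetP: CN => /(_ y yC); rewrite inE => /andP[].
    have := om_ge h1 h2; rewrite cardsU1 uC /=; lia.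
  move=> a b c; rewrite !inE => /andP[aS ua] /andP[bS ub] /andP[cS uc].
  by move=> ab ac bc nab nac nbc; apply: (hcf a b c).
set s := [seq f y | y <- enum N].
have hs : size s < om S ^ 2 by rewrite size_map -cardE; apply: leq_ltn_trans hN (sq_pred w1).
case: (free_color hs) => c cw cs.
exists (fun x => if x == u then c else f x); split.
  move=> x xS; case: eqP => // /eqP xu.
  have := fb x; rewrite !inE xu xS => /(_ isT) h.
  apply: (leq_trans h); apply: sq_mono; exact: om_mono (subsetDl S [set u]).
move=> x y xS yS exy.
have hmem : forall z, z \in S -> e u z -> f z \in s.
  by move=> z zS uz; apply: map_f; rewrite mem_enum inE zS uz.
case: (eqVneq x u) => [xu|xu]; case: (eqVneq y u) => [yu|yu].
- by subst; rewrite eirr in exy.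
- subst; apply/eqP => h; rewrite h (hmem y) // in cs.
- subst; have ux : e u x by rewrite esym.
  apply/eqP => h; by rewrite -h (hmem x) in cs.
- by apply: fp; rewrite // !inE ?xu ?yu.
Qed.

Lemma step_join (S A : {set T}) : A \subset S ->
  (forall x y, x \in A -> y \in S :\: A -> e x y) ->
  good A -> good (S :\: A) -> good S.
Proof.
move=> AS hAB [f1 [fb1 fp1]] [f2 [fb2 fp2]].
have hom : om A + om (S :\: A) <= om S.
  case: (om_wit A) => CA [CAs hCA ->].
  case: (om_wit (S :\: A)) => CB [CBs hCB ->].
  have dis : [disjoint CA & CB].
    rewrite -setI_eq0; apply/eqP/setP => z; rewrite !inE.
    apply/negP => /andP[zA zB].
    move/subsetP: CAs => /(_ z zA) zA'.
    by move/subsetP: CBs => /(_ z zB); rewrite inE zA'.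
  have <- : #|CA :|: CB| = #|CA| + #|CB|.
    by have := leq_card_setU CA CB; rewrite dis => /leqifP /eqP.
  apply: om_ge.
    by rewrite subUset (subset_trans CAs AS) (subset_trans CBs) // subsetDl.
  apply/cliqueP => x y; rewrite !inE.
  have cA := subsetP CAs; have cB := subsetP CBs.
  case/orP=> [xa|xb]; case/orP=> [ya|yb] xy.
  - by move/cliqueP: hCA; apply.
  - by apply: hAB; [apply: cA | apply: cB].
  - by rewrite esym; apply: hAB; [apply: cA | apply: cB].
  - by move/cliqueP: hCB; apply.
exists (fun x => if x \in A then f1 x else om A ^ 2 + f2 x); split.
  have hs := sq_add hom.
  move=> x xS; case: ifP => xA.
    apply: (leq_trans (fb1 x xA)); apply: leq_trans hs; exact: leq_addr.
  have := fb2 x; rewrite inE xA xS => /(_ isT) h.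
  by apply: (leq_trans _ hs); rewrite ltn_add2l.
move=> x y xS yS exy.
case: ifP => xA; case: ifP => yA.
- exact: fp1.
- have := fb1 x xA; apply: contraTneq => ->; by rewrite -leqNgt leq_addr.
- have := fb1 y yA; apply: contraTneq => <-; by rewrite -leqNgt leq_addr.
- by rewrite eqn_add2l; apply: fp2; rewrite // inE ?xA ?yA.
Qed.

Lemma step_cm (S K : {set T}) : K \subset S ->
  (forall x y, x \in [set z in S :\: K | [exists w in K, e z w]] ->
     y \in [set z in S :\: K | [exists w in K, e z w]] -> x != y -> e x y) ->
  (forall x y, x \in [set z in S :\: K | [exists w in K, e z w]] -> y \in K -> e x y) ->
  good K -> good (S :\: K) -> good S.
Proof.
set P := [set z in S :\: K | [exists w in K, e z w]].
move=> KS hPc hPK [f2 [fb2 fp2]] [f1 [fb1 fp1]].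
have hom : om K + #|P| <= om S.
  case: (om_wit K) => CK [CKs hCK ->].
  have PS : P \subset S :\: K by apply/subsetP => z; rewrite inE => /andP[].
  have dis : [disjoint CK & P].
    rewrite -setI_eq0; apply/eqP/setP => z; rewrite in_setI in_set0.
    apply/negP => /andP[zA zB].
    move/subsetP: CKs => /(_ z zA) zA'.
    by move/subsetP: PS => /(_ z zB); rewrite inE zA'.
  have <- : #|CK :|: P| = #|CK| + #|P|.
    by have := leq_card_setU CK P; rewrite dis => /leqifP /eqP.
  apply: om_ge.
    by rewrite subUset (subset_trans CKs) // (subset_trans PS) // subsetDl.
  apply/cliqueP => x y; rewrite !in_setU.
  have cK := subsetP CKs.
  case/orP=> [xa|xb]; case/orP=> [ya|yb] xy.
  - by move/cliqueP: hCK; apply.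
  - by rewrite esym; apply: hPK => //; apply: cK.
  - by apply: hPK => //; apply: cK.
  - by apply: hPc.
set w := om S.
set img := [seq f1 x | x <- enum P].
set F := [seq c <- iota 0 (w ^ 2) | c \notin img].
have Funiq : uniq F by apply: filter_uniq; apply: iota_uniq.
have hsizeF : w ^ 2 - #|P| <= size F.
  have : count (fun c => c \in img) (iota 0 (w ^ 2)) <= #|P|.
    rewrite -size_filter cardE -(size_map f1).
    apply: uniq_leq_size; first by apply: filter_uniq; apply: iota_uniq.
    by move=> c; rewrite mem_filter => /andP[].
  move=> h1; have h2 := count_predC (fun c => c \in img) (iota 0 (w ^ 2)).
  have h3 : count (predC (fun c => c \in img)) (iota 0 (w ^ 2)) = size F.
    by rewrite size_filter; apply: eq_count.
  rewrite size_iota h3 in h2; lia.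
have hK : om K ^ 2 <= size F.
  have := sq_add1 hom; rewrite -/w => h.
  move: hsizeF h; set k2 := om K ^ 2; set w2 := w ^ 2; lia.
exists (fun x => if x \in K then nth 0 F (f2 x) else f1 x); split.
  move=> x xS; case: ifP => xK.
    have hx : f2 x < size F by have := fb2 x xK; lia.
    have := mem_nth 0 hx; rewrite mem_filter mem_iota => /andP[_ /andP[_]]; by rewrite add0n.
  have := fb1 x; rewrite inE xK xS => /(_ isT) h.
  apply: (leq_trans h); apply: sq_mono; exact: om_mono (subsetDl S K).
move=> x y xS yS exy.
have inF : forall z, z \in K -> nth 0 F (f2 z) \in F.
  by move=> z zK; apply: mem_nth; have := fb2 z zK; lia.
have notimg : forall z, z \in K -> nth 0 F (f2 z) \notin img.
  by move=> z zK; have := inF z zK; rewrite mem_filter => /andP[].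
have inP : forall z t, z \in K -> t \in S -> t \notin K -> e z t -> f1 t \in img.
  move=> z t zK tS tK ezt; apply: map_f; rewrite mem_enum inE inE tK tS /=.
  by apply/existsP; exists z; rewrite zK esym.
case: ifP => xK; case: ifP => yK.
- rewrite nth_uniq //; first exact: fp2.
  + by have := fb2 x xK; lia.
  + by have := fb2 y yK; lia.
- apply/eqP => h; have := notimg x xK; rewrite h (inP x y) //.
  by rewrite yK.
- have eyx : e y x by rewrite esym.
  apply/eqP => h; have := notimg y yK; rewrite -h (inP y x) //.
  by rewrite xK.
- by apply: fp1; rewrite // !inE ?xK ?yK.
Qed.



Ltac sd0 := first [done | by rewrite eq_sym | by rewrite esym].
Ltac sdH H := first [by apply: H | by rewrite esym; apply: H].

Definition indep (I : {set T}) := [forall x in I, forall y in I, ~~ e x y].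

Lemma indepP (I : {set T}) : reflect (forall x y, x \in I -> y \in I -> ~~ e x y) (indep I).
Proof.
apply: (iffP forall_inP) => [H x y xI yI | H x xI].
  by move/forall_inP: (H x xI) => /(_ y yI).
by apply/forall_inP => y yI; apply: H.
Qed.

Lemma structure (S : {set T}) u a b c :
  u \in S -> a \in S -> b \in S -> c \in S -> e u a -> e u b -> e u c ->
  a != b -> a != c -> b != c -> ~~ e a b -> ~~ e a c -> ~~ e b c ->
  (exists A : {set T}, [/\ A \subset S, A != set0, A != S &
      forall x y, x \in A -> y \in S :\: A -> e x y]) \/
  (exists K : {set T}, [/\ K \subset S, K != set0, K != S,
      (forall x y, x \in [set z in S :\: K | [exists w in K, e z w]] ->
        y \in [set z in S :\: K | [exists w in K, e z w]] -> x != y -> e x y) &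
      (forall x y, x \in [set z in S :\: K | [exists w in K, e z w]] -> y \in K -> e x y)]).
Proof.
move=> uS aS bS cS ua ub uc ab ac bc nab nac nbc.
pose Pr (I : {set T}) := [&& I \subset S, indep I, 2 < #|I| &
                           [exists z in S, [forall x in I, e z x]]].
have P0 : Pr [set a; b; c].
  apply/and4P; split.
  - by apply/subsetP => x; rewrite !inE => /orP[/orP[/eqP->|/eqP->]|/eqP->].
  - apply/indepP => x y; rewrite !inE => /orP[/orP[/eqP->|/eqP->]|/eqP->] /orP[/orP[/eqP->|/eqP->]|/eqP->];
      rewrite ?eirr // 1?esym //.
  - apply/card_gt2P; exists a, b, c; split.
      by split; rewrite !inE eqxx ?orbT.
    by split; rewrite // eq_sym.
  - apply/existsP; exists u; rewrite uS /=; apply/forall_inP => x.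
    by rewrite !inE => /orP[/orP[/eqP->|/eqP->]|/eqP->].
case: (@arg_maxnP _ [set a; b; c] Pr (fun I : {set T} => #|I|) P0) => I PI Imax.
case/and4P: PI => IS /indepP nI I3 /exists_inP [z0 z0S /forall_inP z0I].
have IS' := subsetP IS.
have third : forall x y, exists2 t, t \in I & (t != x) && (t != y).
  move=> x y.
  have : 0 < #|I :\: [set x; y]|.
    rewrite cardsD; have := subset_leq_card (subsetIr I [set x; y]).
    move=> h; rewrite subn_gt0; apply: (leq_ltn_trans h); rewrite cards2.
    by apply: leq_trans I3; case: (x != y).
  rewrite card_gt0 => /set0Pn [t]; rewrite !inE negb_or => /andP[/andP[tx ty] tI].
  by exists t => //; rewrite tx ty.
set Z := [set z in S | [forall x in I, e z x]].
set O := [set o in S :\: I | [forall x in I, ~~ e o x]].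
have inZ : forall z, z \in Z -> z \in S /\ forall x, x \in I -> e z x.
  by move=> z; rewrite inE => /andP[zS /forall_inP].
have inO : forall o, o \in O -> [/\ o \in S, o \notin I & forall x, x \in I -> ~~ e o x].
  by move=> o; rewrite !inE => /andP[/andP[oI oS] /forall_inP].
have z0Z : z0 \in Z by rewrite inE z0S; apply/forall_inP.
have L0 : forall z w x, z \in Z -> w \in S -> w \notin I -> ~~ e z w -> x \in I -> e w x -> w \in Z.
  move=> z w x zZ wS wI nzw xI wx.
  case: (inZ z zZ) => zS zI.
  rewrite inE wS /=; apply/forall_inP => y yI.
  case: (eqVneq y x) => [->//|yx].
  case: (third x y) => t tI /andP[tx ty].
  apply/negPn/negP => nwy.
  case: (boolP (e w t)) => wt.
  - apply: (noban (a:=z) (b:=x) (c:=w) (d:=t) (x:=y)); first [sd0 | sdH zI | sdH nI].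
  - apply: (nofork (a:=z) (b:=y) (c:=t) (d:=x) (x:=w)); first [sd0 | sdH zI | sdH nI].
have MaxO : forall z o, z \in Z -> o \in O -> ~~ e z o.
  move=> z o zZ oO; apply/negP => zo.
  case: (inZ z zZ) => zS zI; case: (inO o oO) => oS oI oA.
  have : Pr (o |: I).
    apply/and4P; split.
    - by rewrite subUset sub1set oS IS.
    - apply/indepP => x y; rewrite !inE => /orP[/eqP->|xI] /orP[/eqP->|yI].
      + by rewrite eirr.
      + by apply: oA.
      + by rewrite esym; apply: oA.
      + by apply: nI.
    - by rewrite cardsU1 oI add1n ltnS ltnW.
    - apply/exists_inP; exists z => //; apply/forall_inP => x; rewrite !inE.
      by case/orP=> [/eqP->//|]; apply: zI.
  move/Imax; rewrite cardsU1 oI add1n => h.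
  have : #|I| < #|I| := h.
  by rewrite ltnn.
case: (eqVneq O set0) => [O0|On0].
  left; exists Z; split.
  - by apply/subsetP => z /inZ [].
  - by apply/set0Pn; exists z0.
  - case: (third z0 z0) => t tI _.
    apply/negP => /eqP ZS.
    have : t \in Z by rewrite ZS; apply: IS'.
    by case/inZ => _ /(_ t tI); rewrite eirr.
  - move=> x y xZ; rewrite inE => /andP[yZ yS].
    case: (inZ x xZ) => xS xI.
    case: (boolP (y \in I)) => yI; first by apply: xI.
    have : y \notin O by rewrite O0 inE.
    rewrite !inE yI yS /= => /forall_inPn [t tI]; rewrite negbK => yt.
    apply/negPn/negP => nxy.
    by have := L0 x y t xZ yS yI nxy tI yt; rewrite (negbTE yZ).
right.
pose Cl (K : {set T}) := [&& K \subset O, K != set0 &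
                           [forall x in K, forall y in O, e x y ==> (y \in K)]].
have ClO : Cl O.
  apply/and3P; split => //.
  by apply/forall_inP => x _; apply/forall_inP => y yO; apply/implyP.
case: (@arg_minnP _ O Cl (fun K : {set T} => #|K|) ClO) => K /and3P[KO Kne Kcl] Kmin.
have KO' := subsetP KO.
have Kcl' : forall x y, x \in K -> y \in O -> e x y -> y \in K.
  by move=> x y xK yO; move/forall_inP: Kcl => /(_ x xK) /forall_inP /(_ y yO) /implyP.
set P := [set z in S :\: K | [exists w in K, e z w]].
have Pfacts : forall x, x \in P -> [/\ x \in S, x \notin I, e z0 x,
    (exists2 o, o \in K & e x o) & exists2 t, t \in I & ~~ e x t].
  move=> x; rewrite !inE => /andP[/andP[xK xS] /exists_inP [o oK xo]].
  case: (inO o (KO' o oK)) => oS oI oA.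
  have xI : x \notin I.
    by apply/negP => xI; have := oA x xI; rewrite esym xo.
  have xO : x \notin O.
    by apply/negP => xO; have := Kcl' o x oK xO; rewrite esym xo (negbTE xK) => /(_ isT).
  have [t tI xt] : exists2 t, t \in I & e x t.
    move: xO; rewrite !inE xI xS /= => /forall_inPn [t tI]; rewrite negbK => xt.
    by exists t.
  have xZ : x \notin Z.
    by apply/negP => xZ; have := MaxO x o xZ (KO' o oK); rewrite xo.
  split => //.
  - apply/negPn/negP => nzx.
    by have := L0 z0 x t z0Z xS xI nzx tI xt; rewrite (negbTE xZ).
  - by exists o.
  - move: xZ; rewrite inE xS /= => /forall_inPn [t' t'I nxt'].
    by exists t'.
have Pi : forall x y1 y2, x \in P -> y1 \in I -> y2 \in I -> y1 != y2 -> e x y1 || e x y2.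
  move=> x y1 y2 xP y1I y2I y12.
  case: (Pfacts x xP) => xS xI z0x [o oK xo] _.
  case: (inO o (KO' o oK)) => oS oI oA.
  have oO := KO' o oK.
  apply/negPn/negP; rewrite negb_or => /andP[nx1 nx2].
  have z0o : ~~ e z0 o by apply: MaxO.
  apply: (nofork (a:=z0) (b:=y1) (c:=y2) (d:=x) (x:=o)); first [sd0 | sdH z0I | sdH nI | sdH oA].
have two : forall x, x \in P -> exists t1, exists t2,
    [/\ t1 \in I, t2 \in I, t1 != t2, e x t1 & e x t2].
  move=> x xP.
  case: (Pfacts x xP) => _ _ _ _ [b0 b0I nxb0].
  case: (third b0 b0) => t1 t1I /andP[t1b _].
  case: (third b0 t1) => t2 t2I /andP[t2b t2t1].
  exists t1, t2; split => //; first by rewrite eq_sym.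
  - by have := Pi x b0 t1 xP b0I t1I; rewrite eq_sym t1b (negbTE nxb0); apply.
  - by have := Pi x b0 t2 xP b0I t2I; rewrite eq_sym t2b (negbTE nxb0); apply.
have Pcomp : forall x y, x \in P -> y \in K -> e x y.
  move=> x y xP yK.
  case: (Pfacts x xP) => xS xI z0x [o oK xo] _.
  case: (two x xP) => t1 [t2 [t1I t2I t12 xt1 xt2]].
  set K' := [set y in K | e x y].
  have ClK' : Cl K'.
    apply/and3P; split.
    - by apply/subsetP => v; rewrite inE => /andP[/KO'].
    - by apply/set0Pn; exists o; rewrite inE oK.
    - apply/forall_inP => v; rewrite inE => /andP[vK xv].
      apply/forall_inP => v' v'O; apply/implyP => vv'.
      rewrite inE (Kcl' v v' vK v'O vv') /=.
      case: (inO v (KO' v vK)) => _ _ vA.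
      case: (inO v' v'O) => _ _ v'A.
      apply/negPn/negP => nxv'.
      apply: (nofork (a:=x) (b:=t1) (c:=t2) (d:=v) (x:=v')); first [sd0 | sdH nI | sdH vA | sdH v'A].
  have := Kmin K' ClK' => hle.
  have : K' == K by rewrite eqEcard hle andbT; apply/subsetP => v; rewrite inE => /andP[].
  by move/eqP => eK; move: yK; rewrite -eK inE => /andP[].
have Pcl : forall x1 x2, x1 \in P -> x2 \in P -> x1 != x2 -> e x1 x2.
  move=> x1 x2 x1P x2P x12; apply/negPn/negP => n12.
  case: (set0Pn _ Kne) => o oK.
  case: (inO o (KO' o oK)) => oS oI oA.
  have x1o := Pcomp x1 o x1P oK; have x2o := Pcomp x2 o x2P oK.
  have oO := KO' o oK.
  case: (Pfacts x1 x1P) => _ _ z0x1 _ [b1 b1I nx1b1].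
  case: (Pfacts x2 x2P) => _ _ z0x2 _ [b2 b2I nx2b2].
  have z0o : ~~ e z0 o by apply: MaxO.
  case: (eqVneq b1 b2) => [eb|nb].
  - subst b2.
    apply: (noban (a:=z0) (b:=x1) (c:=o) (d:=x2) (x:=b1)); first [sd0 | sdH z0I | sdH oA].
  - have x2b1 : e x2 b1.
      by have := Pi x2 b1 b2 x2P b1I b2I nb; rewrite (negbTE nx2b2) orbF.
    case: (third b1 b2) => t tI /andP[tb1 tb2].
    have to : t != o by apply/negP => /eqP tO; rewrite -tO tI in oI.
    have x1t : e x1 t.
      by have := Pi x1 b1 t x1P b1I tI; rewrite eq_sym tb1 (negbTE nx1b1); apply.
    have x2t : e x2 t.
      by have := Pi x2 b2 t x2P b2I tI; rewrite eq_sym tb2 (negbTE nx2b2); apply.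
    apply: (noban (a:=x2) (b:=t) (c:=x1) (d:=o) (x:=b1)); first [sd0 | sdH nI | sdH oA].
exists K; split => //.
- by apply/subsetP => v /KO' /inO [].
- case: (third z0 z0) => t tI _.
  apply/negP => /eqP KS.
  have : t \in K by rewrite KS; apply: IS'.
  by move/KO' /inO => [_ tI' _]; rewrite tI in tI'.
Qed.


Lemma properD (A S : {set T}) : A \subset S -> A != set0 -> S :\: A \proper S.
Proof.
move=> AS /set0Pn [x xA].
rewrite properE subsetDl /=; apply/subsetPn; exists x.
  by move/subsetP: AS; apply.
by rewrite inE xA.
Qed.

Lemma all_good n (S : {set T}) : #|S| <= n -> good S.
Proof.
elim: n S => [|n IH] S hS.
  have -> : S = set0 by apply/eqP; rewrite -cards_eq0 -leqn0.
  by exists (fun _ => 0); split => x; rewrite inE.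
case: (set_0Vmem S) => [->|[u0 u0S]].
  by exists (fun _ => 0); split => x; rewrite inE.
have IHs : forall A : {set T}, A \proper S -> good A.
  by move=> A /proper_card hA; apply: IH; rewrite -ltnS (leq_trans hA hS).
case: (classic (exists u a b c, [/\ u \in S, a \in S, b \in S & c \in S] /\
     [/\ e u a, e u b & e u c] /\ [/\ a != b, a != c & b != c] /\
     [/\ ~~ e a b, ~~ e a c & ~~ e b c])) =>
   [[u [a [b [c [[uS aS bS cS] [[ua ub uc] [[ab ac bc] [nab nac nbc]]]]]]]]|nocl].
  case: (structure uS aS bS cS ua ub uc ab ac bc nab nac nbc) =>
      [[A [AS A0 AnS hA]]|[K [KS K0 KnS hP hK]]].
    apply: (step_join AS hA); apply: IHs.
      by rewrite properEneq AnS AS.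
    exact: properD.
  apply: (step_cm KS hP hK); apply: IHs.
    by rewrite properEneq KnS KS.
  exact: properD.
apply: (step_greedy u0S); last by apply: IHs; apply: properD1.
move=> a b c aS bS cS ua ub uc ab ac bc nab nac nbc; apply: nocl.
by exists u0, a, b, c.
Qed.

End S.

Lemma bigmin_le (I : eqType) (r : seq I) (P : pred I) (F : I -> nat) idx j :
  j \in r -> P j -> \big[minn/idx]_(i <- r | P i) F i <= F j.
Proof.
elim: r => // x r IH; rewrite inE big_cons => /orP[/eqP<- Pj | jr Pj].
  by rewrite Pj; exact: geq_minl.
case: (P x); last exact: IH.
by apply: leq_trans (geq_minr _ _) _; exact: IH.
Qed.

Theorem corollary3p15 (T : finType) (e : rel T) :
  simple_graph e -> free_of e fork -> free_of e banner ->
  chromatic_number e <= clique_number e ^ 2.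
Proof.
move=> [esym eirr] hf hb.
have [f [fb fp]] := all_good esym eirr hf hb (leqnn #|[set: T]|).
have om_eq : om e [set: T] = clique_number e.
  by rewrite /om /clique_number; apply: eq_bigl => C; rewrite subsetT.
rewrite -om_eq.
set w := om e [set: T].
rewrite /chromatic_number.
case: (ltnP #|T| (w ^ 2)) => hw.
  apply: ltnW; apply: leq_ltn_trans hw.
  apply: (big_ind (fun x => x <= #|T|)) => //.
    by move=> x y hx _; apply: leq_trans (geq_minl x y) hx.
  by move=> i _; rewrite -ltnS ltn_ord.
have hcol : colorable e (w ^ 2).
  apply/existsP; exists [ffun x => Ordinal (fb x (in_setT x))].
  apply/forallP => x; apply/forallP => y; apply/implyP => exy; rewrite !ffunE.
  by apply: contra (fp x y (in_setT x) (in_setT y) exy) => /eqP [->].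
have hw' : w ^ 2 < #|T|.+1 by rewrite ltnS.
have h := @bigmin_le _ (index_enum 'I_#|T|.+1) (fun k : 'I_#|T|.+1 => colorable e k)
  (fun k : 'I_#|T|.+1 => nat_of_ord k) #|T| (Ordinal hw') (mem_index_enum _) hcol.
exact: h.
Qed.
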